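(* Let $(A,\mathit{Con},\mid\!\sim)$ be an abstract nonmonotonic system and $(B,\mathit{Con}^*,\Delta)$ the normal default structure constructed from it as described in the context. For every $P\in\mathit{Con}$, every extension of $P$ in $(B,\mathit{Con}^*,\Delta)$ is of the form $\widetilde{Q}\cup\{[Q]\}$ for some $Q\in\mathit{Con}$ with $Q\subseteq P\subseteq\widetilde{Q}$.
   Context: An abstract nonmonotonic system is a triple $(A,\mathit{Con},\mid\!\sim)$ where $\mathit{Con}$ is a collection of finite subsets of $A$ and $\mid\!\sim\ \subseteq\mathit{Con}\times\mathit{Con}$, satisfying: (1) $X\subseteq Y\in\mathit{Con}\Rightarrow X\in\mathit{Con}$; (2) $a\in A\Rightarrow\{a\}\in\mathit{Con}$; (3) $X\mid\!\sim T\Rightarrow X\cup T\in\mathit{Con}$; (4) $Y\subseteq X\Rightarrow X\mid\!\sim Y$; (5) $X\mid\!\sim T$ and $T\cup X\mid\!\sim Y$ imply $X\mid\!\sim Y$; (6) $X\mid\!\sim Y$ and $X\mid\!\sim Z$ imply $X\mid\!\sim Y\cup Z$. Write $X\mid\!\sim a$ for $X\mid\!\sim\{a\}$, and $\widetilde{X}:=\{t\mid X\mid\!\sim\{t\}\}$. Construction: $B:=A\cup\{[X]\mid X\in\mathit{Con}\}$, where $[X]$ are new pairwise distinct tokens. $\Delta:=\{\frac{X:[X]}{[X]}\mid X\in\mathit{Con}\}\cup\{\frac{\{[X]\}:a}{a}\mid X\mid\!\sim a,\ a\notin X\}$. For finite $W\subseteq B$, $W\in\mathit{Con}^*$ iff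 (i) $W\cap A\in\mathit{Con}$; (ii) $W$ contains at most one token of the form $[X]$; (iii) if $[X]\in W$ then $X\mid\!\sim W\setminus\{[X]\}$. An arbitrary subset of $B$ is consistent if all its finite subsets are in $\mathit{Con}^*$. Extensions in $(B,\mathit{Con}^*,\Delta)$: for consistent $x\subseteq B$ and $S\subseteq B$, $\phi(x,S,0)=x$, $\phi(x,S,i+1)=\phi(x,S,i)\cup\{a\mid\frac{X:a}{a}\in\Delta,\ X\subseteq\phi(x,S,i),\ \{a\}\cup S\text{ consistent}\}$, $\Phi(x,S)=\bigcup_i\phi(x,S,i)$; $y$ is an extension of $x$ if $\Phi(x,y)=y$. *)

(* Defs.v *)
From mathcomp Require Import all_boot.
From mathcomp Require Import boolp classical_sets cardinality.
Set Implicit Arguments. Unset Strict Implicit. Unset Printing Implicit Defensive.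
Local Open Scope classical_set_scope.

Section ANS.
Variable A : Type.

Definition is_ANS (Con : set A -> Prop) (ent : set A -> set A -> Prop) : Prop :=
  (forall X, Con X -> finite_set X) /\
  (forall X Y, ent X Y -> Con X /\ Con Y) /\
  (forall X Y, X `<=` Y -> Con Y -> Con X) /\
  (forall a, Con [set a]) /\
  (forall X T, ent X T -> Con (X `|` T)) /\
  (forall X Y, Con X -> Y `<=` X -> ent X Y) /\
  (forall X T Y, ent X T -> ent (T `|` X) Y -> ent X Y) /\
  (forall X Y Z, ent X Y -> ent X Z -> ent X (Y `|` Z)).

Definition tilde (ent : set A -> set A -> Prop) (X : set A) : set A :=
  [set t | ent X [set t]].

(* B := A ∪ { [X] | X ∈ Con }; the token [X] is  inr (exist _ X HX). *)
Definition Btype (Con : set A -> Prop) : Type := (A + {X : set A | Con X})%type.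

Definition token (Con : set A -> Prop) (X : set A) (HX : Con X) : Btype Con :=
  inr (exist _ X HX).

Section Construction.
Variables (Con : set A -> Prop) (ent : set A -> set A -> Prop).
Local Notation B := (Btype Con).

Definition partA (W : set B) : set A := [set a | W (inl a)].

(* Con^* on finite subsets of B.  In (iii), W \ {[X]} contains no other token
   by (ii), hence is identified with W ∩ A. *)
Definition ConStar (W : set B) : Prop :=
  [/\ finite_set W,
      Con (partA W),
      (forall t1 t2, W (inr t1) -> W (inr t2) -> t1 = t2) &
      (forall X (HX : Con X), W (token HX) -> ent X (partA W))].

Definition consistent (x : set B) : Prop :=
  forall W, finite_set W -> W `<=` x -> ConStar W.

(* Δ : normal defaults  (prerequisite : conclusion / conclusion), encoded as
   pairs (prerequisite, conclusion). *)
Definition Delta (d : set B * B) : Prop :=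
  (exists X (HX : Con X), d = (inl @` X, token HX)) \/
  (exists X (HX : Con X) (a : A),
      ent X [set a] /\ ~ X a /\ d = ([set token HX], inl a)).

Fixpoint phi (x S : set B) (i : nat) : set B :=
  match i with
  | 0 => x
  | i.+1 => phi x S i `|`
      [set c | exists Xp, Delta (Xp, c) /\ Xp `<=` phi x S i /\ consistent (c |` S)]
  end.

Definition Phi (x S : set B) : set B := \bigcup_(i in setT) phi x S i.

Definition extension (x y : set B) : Prop := Phi x y = y.

End Construction.
End ANS.

(* Main.v *)
Require Import Defs.
From mathcomp Require Import all_boot.
From mathcomp Require Import boolp classical_sets cardinality.
Local Open Scope classical_set_scope.

Lemma ent_weaken (A : Type) (Con : set A -> Prop) (ent : set A -> set A -> Prop)
  (Hsys : is_ANS Con ent) X Y Z : ent X Z -> Y `<=` Z -> ent X Y.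
Proof.
case: Hsys => [_ [_ [H1 [_ [H3 [H4 [H5 H6]]]]]]] hXZ hYZ.
apply: (H5 X Z Y hXZ); apply: H4; first by rewrite setUC; exact: H3.
by move=> ? /hYZ ?; left.
Qed.

Lemma ent_fin (A : Type) (Con : set A -> Prop) (ent : set A -> set A -> Prop)
  (Hsys : is_ANS Con ent) Q Z : Con Q -> finite_set Z -> Z `<=` tilde ent Q -> ent Q Z.
Proof.
case: Hsys => [_ [_ [H1 [_ [H3 [H4 [H5 H6]]]]]]] HQ fZ.
have [s ->] := (@finite_seqP {classic A} Z).1 fZ.
elim: s => [|a s IH] hs; first by apply: H4 => //.
have -> : [set` (a :: s)] = [set a] `|` [set` s] :> set A.
  apply/seteqP; split => x; rewrite /= inE.
    by case/orP => [/eqP ->|h]; [left|right].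
  by move=> [->|h]; rewrite ?eqxx // h orbT.
apply: H6; first by apply: hs; rewrite /= inE eqxx.
by apply: IH => x hx; apply: hs; rewrite /= inE; apply/orP; right.
Qed.

Lemma tok_inj (A : Type) (Con : set A -> Prop) X Q (HX : Con X) (HQ : Con Q) :
  token HX = token HQ -> X = Q.
Proof.
move=> e; have := congr1 (fun z : Btype Con => if z is inr s then proj1_sig s else X) e.
by [].
Qed.

Arguments ent_weaken {A Con ent} Hsys {X Y Z}.
Arguments ent_fin {A Con ent} Hsys {Q Z}.
Arguments tok_inj {A Con X Q HX HQ}.

Lemma cons_std (A : Type) (Con : set A -> Prop) (ent : set A -> set A -> Prop)
  (Hsys : is_ANS Con ent) Q (HQ : Con Q) S :
  S `<=` tilde ent Q -> consistent ent (inl @` S `|` [set token HQ]).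
Proof.
move=> hS W fW sW.
have Hs := Hsys; case: Hs => [_ [_ [H1 [_ [H3 [H4 [H5 H6]]]]]]].
have fin : finite_set (partA W).
  apply: (@finite_preimage _ _ W inl) => //; by move=> ? ? _ _ [].
have sub : partA W `<=` tilde ent Q.
  move=> a /sW [[b hb [e]]|//]; by rewrite -e; apply: hS.
have ent' : ent Q (partA W) := ent_fin Hsys HQ fin sub.
split => //.
- by apply: (H1 _ (Q `|` partA W)); [move=> ? ?; right | exact: H3].
- move=> t1 t2 /sW [[? _ //]|[->]] /sW [[? _ //]|[->]] //.
- move=> X HX /sW [[? _ //]|e].
  by have eXQ := tok_inj e; subst X.
Qed.

Arguments cons_std {A Con ent} Hsys {Q} HQ {S}.

Theorem lemma4 (A : Type) (Con : set A -> Prop) (ent : set A -> set A -> Prop)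
  (Hsys : is_ANS Con ent) (P : set A) (HP : Con P) (y : set (Btype Con)) :
  extension ent (inl @` P) y ->
  exists (Q : set A) (HQ : Con Q),
    Q `<=` P /\ P `<=` tilde ent Q /\
    y = (inl @` tilde ent Q) `|` [set token HQ].
Proof.
rewrite /extension => H.
have Hs := Hsys; case: Hs => [_ [_ [H1 [_ [H3 [H4 [H5 H6]]]]]]].
pose phi' i := phi ent (inl @` P) y i.
have phiy : forall i, phi' i `<=` y by move=> i z hz; rewrite -H; exists i.
have yphi : forall z, y z -> exists i, phi' i z.
  by move=> z; rewrite -H => -[i _ hz]; exists i.
have notok : forall j, (forall t, ~ phi' j (inr t)) -> phi' j `<=` inl @` P.
  elim=> [|j IH] hno z //.
  move=> hz; have hz1 := hz; case: hz => [h|[Xp [HD [Hsub Hc]]]].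
    by apply: IH => // t ht; apply: (hno t); left.
  exfalso; case: HD => [[X [HX e]] | [X [HX [a [_ [_ e]]]]]]; case: e => e1 e2.
    by apply: (hno (exist _ X HX)); move: hz1; rewrite e2.
  by apply: (hno (exist _ X HX)); left; apply: Hsub; rewrite e1.
have mono : forall W1 W2 : set (Btype Con), W1 `<=` W2 -> consistent ent W2 -> consistent ent W1.
  by move=> W1 W2 s c W fW sW; exact: (c W fW (fun z h => s z (sW z h))).
case: (pselect (exists n t, phi' n (inr t))) => [[n [t hnt]] | hno]; last first.
  exfalso.
  have yP : y `<=` inl @` P.
    move=> z /yphi [i hi]; apply: (notok i) => // t ht; apply: hno; by exists i, t.
  have c : consistent ent (token HP |` y).
    apply: (mono _ _ _ (cons_std Hsys HP (S := P) _)).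
      by move=> z [->|/yP hz]; [right|left].
    by move=> p Pp; apply: H4 => // ? ->.
  apply: hno; exists 1%N, (exist _ P HP); right; exists (inl @` P); split.
    by left; exists P, HP.
  by split.
have first : forall n t, phi' n (inr t) -> exists m Q (HQ : Con Q),
    (forall t, ~ phi' m (inr t)) /\ phi' m.+1 (token HQ) /\
    consistent ent (token HQ |` y) /\ inl @` Q `<=` phi' m.
  elim=> [|k IH] t0 /=; first by case.
  case: (pselect (exists t, phi' k (inr t))) => [[t' h]|hn].
    by move=> _; exact: IH t' h.
  move=> ht; have ht1 : phi' k.+1 (inr t0) by [].
  case: ht => [h|[Xp [HD [Hsb Hc]]]]; first by exfalso; apply: hn; exists t0.
  case: HD => [[X [HX e]] | [X [HX [a [_ [_ e]]]]]]; case: e => e1 e2 //.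
  exists k, X, HX; split; first by move=> t1 h; apply: hn; exists t1.
  rewrite e2 in ht1 Hc; subst Xp; by split.
have [m [Q [HQ [hnom [hQ1 [hcons hQsub]]]]]] := first n t hnt.
have QP : Q `<=` P.
  move=> q Qq; have := notok m hnom _ (hQsub (inl q) (ex_intro2 _ _ q Qq erefl)).
  by case=> p Pp [<-].
have yQ : y (token HQ) by apply: (phiy m.+1).
have ycons : forall W, finite_set W -> W `<=` y -> ConStar ent W.
  by move=> W fW sW; apply: hcons => // z /sW hz; right.
have ytok : forall t1, y (inr t1) -> t1 = exist _ Q HQ.
  move=> t1 h; have sb : [set inr t1; token HQ] `<=` y by move=> z [->|->].
  have [_ _ Hu _] := ycons _ (finite_set2 _ _) sb.
  by apply: Hu; [left|right].
have yA : forall a, y (inl a) -> tilde ent Q a.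
  move=> a h; have sb : [set token HQ; inl a] `<=` y by move=> z [->|->].
  have [_ _ _ He] := ycons _ (finite_set2 _ _) sb.
  apply: (ent_weaken Hsys (He Q HQ (or_introl erefl))).
  by move=> b ->; rewrite /partA /=; right.
have Ptil : P `<=` tilde ent Q.
  by move=> p Pp; apply: yA; apply: (phiy 0%N); exists p.
have ysub : y `<=` inl @` tilde ent Q `|` [set token HQ].
  case=> [a|t0] h; first by left; exists a => //; apply: yA.
  by right; rewrite (ytok t0 h).
have tily : forall a, tilde ent Q a -> y (inl a).
  move=> a ha; case: (pselect (Q a)) => [Qa|nQa].
    by apply: (phiy 0%N); exists a => //; apply: QP.
  apply: (phiy m.+2); right; exists [set token HQ]; split.
    by right; exists Q, HQ, a.
  split; first by move=> z ->.
  apply: (mono _ _ _ (cons_std Hsys HQ (S := tilde ent Q) (fun _ h => h))).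
  by move=> z [->|/ysub hz] //; left; exists a.
exists Q, HQ; split => //; split => //.
apply/seteqP; split => // z [[a ha <-]|->] //; exact: tily.
Qed.
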